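(* Let $V=\mathrm{GF}(2)^n$ with $n\in\{1,2\}$ and let $g:V^3\to\mathrm{GF}(2)$ be a trilinear form satisfying $g(x,y,z)=g(z,y,x)$ for all $x,y,z\in V$. Then there is $0\ne x\in V$ such that the induced bilinear form $g(x,-,-)$ is symmetric. *)

(* Defs.v *)
From HB Require Import structures.
From mathcomp Require Import all_boot all_order all_algebra.
Set Implicit Arguments. Unset Strict Implicit. Unset Printing Implicit Defensive.
Import GRing.Theory.
Local Open Scope ring_scope.

Definition trilinear (F : fieldType) (V : lmodType F) (g : V -> V -> V -> F) : Prop :=
  (forall (a : F) (x x' y z : V), g (a *: x + x') y z = a * g x y z + g x' y z) /\
  (forall (a : F) (x y y' z : V), g x (a *: y + y') z = a * g x y z + g x y' z) /\
  (forall (a : F) (x y z z' : V), g x y (a *: z + z') = a * g x y z + g x y z').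

(* Main.v *)
Require Import Defs.
From HB Require Import structures.
From mathcomp Require Import all_boot all_order all_algebra.
Import GRing.Theory.
Local Open Scope ring_scope.

Lemma F2_cases (a : 'F_2) : a = 0 \/ a = 1.
Proof. case: a => [[|[|k]]] Hk; [left|right|]; try exact/val_inj. by []. Qed.

Lemma lin_sum (F : fieldType) n (f : 'rV[F]_n -> F)
  (hf : forall a x x', f (a *: x + x') = a * f x + f x') (y : 'rV[F]_n) :
  f y = \sum_(j < n) y 0 j * f (delta_mx 0 j).
Proof.
have f0 : f 0 = 0.
  have := hf 1 0 0; rewrite scaler0 addr0 mul1r -{1}[f 0]addr0.
  by move=> /addrI /esym.
rewrite {1}(row_sum_delta y).
elim/big_rec2: _ => // i s1 s2 _ <-. by rewrite hf.
Qed.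

Lemma sym_of_basis (F : fieldType) n (h : 'rV[F]_n -> 'rV[F]_n -> F)
  (hl : forall a y y' z, h (a *: y + y') z = a * h y z + h y' z)
  (hr : forall a y z z', h y (a *: z + z') = a * h y z + h y z')
  (hb : forall i j, h (delta_mx 0 i) (delta_mx 0 j) = h (delta_mx 0 j) (delta_mx 0 i))
  y z : h y z = h z y.
Proof.
rewrite (@lin_sum _ _ (fun y => h y z) (fun a x x' => hl a x x' z) y).
rewrite (@lin_sum _ _ (fun z => h z y) (fun a x x' => hl a x x' y) z).
under eq_bigr => i _ do rewrite (@lin_sum _ _ (h _) (fun a x x' => hr a _ x x') z) mulr_sumr.
under [RHS]eq_bigr => i _ do rewrite (@lin_sum _ _ (h _) (fun a x x' => hr a _ x x') y) mulr_sumr.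
rewrite exchange_big /=; apply: eq_bigr => j _; apply: eq_bigr => i _.
by rewrite hb mulrCA.
Qed.

Lemma delta_neq0 n (i : 'I_n) : (delta_mx 0 i : 'rV['F_2]_n) != 0.
Proof. apply/eqP => /matrixP /(_ 0 i); rewrite !mxE !eqxx /=. by []. Qed.

Theorem lemma4p7 (n : nat) (hn : (n == 1)%N || (n == 2)%N)
  (g : 'rV['F_2]_n -> 'rV['F_2]_n -> 'rV['F_2]_n -> 'F_2)
  (hg : trilinear g)
  (hsym : forall x y z : 'rV['F_2]_n, g x y z = g z y x) :
  exists2 x : 'rV['F_2]_n, x != 0 & forall y z : 'rV['F_2]_n, g x y z = g x z y.
Proof.
case: hg => [h1 [h2 h3]].
have key : forall x, (forall i j, g x (delta_mx 0 i) (delta_mx 0 j) = g x (delta_mx 0 j) (delta_mx 0 i)) ->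
   forall y z, g x y z = g x z y.
  move=> x hb y z; apply: (@sym_of_basis _ _ (g x)) => //.
case/orP: hn => /eqP En; subst n.
  exists (delta_mx 0 0); first exact: delta_neq0.
  by apply: key => i j; rewrite !ord1.
have red : forall x, g x (delta_mx 0 0) (delta_mx 0 1) = g x (delta_mx 0 1) (delta_mx 0 0) ->
  forall y z, g x y z = g x z y.
  move=> x hx; apply: key => i j.
  have o2 : forall k : 'I_2, k = 0 \/ k = 1.
    by case=> [[|[|m]]] Hm; [left|right|]; try exact/val_inj.
  by case: (o2 i) => ->; case: (o2 j) => ->.
set e0 : 'rV['F_2]_2 := delta_mx 0 0. set e1 : 'rV['F_2]_2 := delta_mx 0 1.
have [H0|H0] := eqVneq (g e0 e0 e1) (g e0 e1 e0).
  by exists e0; [exact: delta_neq0 | exact: red].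
have [H1|H1] := eqVneq (g e1 e0 e1) (g e1 e1 e0).
  by exists e1; [exact: delta_neq0 | exact: red].
exists (e0 + e1).
  apply/eqP => /matrixP /(_ 0 0); rewrite !mxE /=. by [].
have hadd : forall x x' y z, g (x + x') y z = g x y z + g x' y z.
  by move=> x x' y z; have := h1 1 x x' y z; rewrite scale1r mul1r.
apply: red; rewrite !hadd.
move: H0 H1; case: (F2_cases (g e0 e0 e1)) => ->; case: (F2_cases (g e0 e1 e0)) => ->;
  case: (F2_cases (g e1 e0 e1)) => ->; case: (F2_cases (g e1 e1 e0)) => -> //.
all: by move=> _ _; apply/eqP.
Qed.
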